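(* Let $(H,A,C)$ be a Doi-Hopf datum and $\gamma:C\to\mathrm{Hom}(C,A)$ an $A$-integral. The following are equivalent: (1) $\gamma$ is total, i.e. $\sum\gamma(c_{(1)})(c_{(2)})=\varepsilon(c)1_A$ for all $c\in C$; (2) for all $c\in C$, $a\in A$: $\sum c_{(3)}\cdot\gamma(c_{(1)})(c_{(2)})_{<-1>}\otimes a\,\gamma(c_{(1)})(c_{(2)})_{<0>}=c\otimes a$ in $C\otimes A$; (3) for every Doi-Hopf module $M\in{}^C\mathcal M(H)_A$ and every $m\in M$: $\sum m_{<0>}\,\gamma(m_{<-2>})(m_{<-1>})=m$.
   Context: Sweedler notation $\Delta(c)=\sum c_{(1)}\otimes c_{(2)}$, $\rho(m)=\sum m_{<-1>}\otimes m_{<0>}$ (iterated $m_{<-2>}\otimes m_{<-1>}\otimes m_{<0>}$). Doi-Hopf datum $(H,A,C)$: $H$ bialgebra over commutative ring $k$, $A$ left $H$-comodule algebra, $C$ right $H$-module coalgebra ($\Delta(c\cdot h)=\sum c_{(1)}\cdot h_{(1)}\otimes c_{(2)}\cdot h_{(2)}$, $\varepsilon(c\cdot h)=\varepsilon(c)\varepsilon(h)$), $C$ flat. ${}^C\mathcal M(H)_A$: right $A$-modules $M$ with left $C$-coaction such that $\rho_M(ma)=\sum m_{<-1>}\cdot a_{<-1>}\otimes m_{<0>}a_{<0>}$. An $A$-integral is a $k$-linear $\gamma:C\to\mathrm{Hom}(C,A)$ with, for all $a\in A$, $c,d\in C$: (i) $\sum a_{<0>}\gamma(c\cdot a_{<-2>})(d\cdot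 a_{<-1>})=\gamma(c)(d)\,a$; (ii) $\sum c_{(1)}\otimes\gamma(c_{(2)})(d)=\sum d_{(2)}\cdot\gamma(c)(d_{(1)})_{<-1>}\otimes\gamma(c)(d_{(1)})_{<0>}$. *)

(* Defs.v *)
(* Tensor products are not available in MathComp, so an
   element of U (x) V is represented by a finite list of pure tensors
   (seq (U * V)), and two such lists are *equal in U (x) V* iff they have the
   same image under every k-bilinear map into every k-module (universal
   property of the tensor product).  Likewise for U (x) V (x) X. *)
From HB Require Import structures.
From mathcomp Require Import all_boot all_order all_algebra.
Set Implicit Arguments. Unset Strict Implicit. Unset Printing Implicit Defensive.
Import GRing.Theory.
Local Open Scope ring_scope.

Section DoiHopf.
Variable k : comPzRingType.

Definition klin (U W : lmodType k) (f : U -> W) : Prop :=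
  forall (a : k) u v, f (a *: u + v) = a *: f u + f v.

Definition kform (U : lmodType k) (e : U -> k) : Prop :=
  forall (a : k) u v, e (a *: u + v) = a * e u + e v.

Definition bilin (U V W : lmodType k) (f : U -> V -> W) : Prop :=
  (forall (a : k) u1 u2 v, f (a *: u1 + u2) v = a *: f u1 v + f u2 v) /\
  (forall (a : k) u v1 v2, f u (a *: v1 + v2) = a *: f u v1 + f u v2).

Definition trilin (U V X W : lmodType k) (f : U -> V -> X -> W) : Prop :=
  [/\ (forall (a : k) u1 u2 v x, f (a *: u1 + u2) v x = a *: f u1 v x + f u2 v x),
      (forall (a : k) u v1 v2 x, f u (a *: v1 + v2) x = a *: f u v1 x + f u v2 x) &
      (forall (a : k) u v x1 x2, f u v (a *: x1 + x2) = a *: f u v x1 + f u v x2)].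

Definition tsum2 (U V W : lmodType k) (f : U -> V -> W) (t : seq (U * V)) : W :=
  \sum_(p <- t) f p.1 p.2.

Definition tsum3 (U V X W : lmodType k) (f : U -> V -> X -> W)
  (t : seq (U * V * X)) : W :=
  \sum_(p <- t) f p.1.1 p.1.2 p.2.

Definition teq2 (U V : lmodType k) (s t : seq (U * V)) : Prop :=
  forall (W : lmodType k) (f : U -> V -> W), bilin f -> tsum2 f s = tsum2 f t.

Definition teq3 (U V X : lmodType k) (s t : seq (U * V * X)) : Prop :=
  forall (W : lmodType k) (f : U -> V -> X -> W), trilin f -> tsum3 f s = tsum3 f t.

Definition tlin (M U V : lmodType k) (D : M -> seq (U * V)) : Prop :=
  forall (a : k) m m',
    teq2 (D (a *: m + m')) ([seq (a *: p.1, p.2) | p <- D m] ++ D m').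

Definition is_algebra (A : lmodType k) (mul : A -> A -> A) (one : A) : Prop :=
  [/\ bilin mul, (forall x y z, mul x (mul y z) = mul (mul x y) z),
      (forall x, mul one x = x) & (forall x, mul x one = x)].

Definition is_coalgebra (C : lmodType k) (D : C -> seq (C * C)) (e : C -> k) : Prop :=
  [/\ tlin D, kform e,
      (forall c, teq3 [seq (q.1, q.2, p.2) | p <- D c, q <- D p.1]
                      [seq (p.1, q.1, q.2) | p <- D c, q <- D p.2]),
      (forall c, \sum_(p <- D c) e p.1 *: p.2 = c) &
      (forall c, \sum_(p <- D c) e p.2 *: p.1 = c)].

Definition is_bialgebra (H : lmodType k) (mulH : H -> H -> H) (oneH : H)
  (DH : H -> seq (H * H)) (eH : H -> k) : Prop :=
  [/\ is_algebra mulH oneH, is_coalgebra DH eH,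
      teq2 (DH oneH) [:: (oneH, oneH)] /\
      (forall x y, teq2 (DH (mulH x y))
                    [seq (mulH p.1 q.1, mulH p.2 q.2) | p <- DH x, q <- DH y]),
      eH oneH = 1 &
      (forall x y, eH (mulH x y) = eH x * eH y)].

Definition is_left_comodule (Hc : lmodType k) (D : Hc -> seq (Hc * Hc)) (e : Hc -> k)
  (M : lmodType k) (rho : M -> seq (Hc * M)) : Prop :=
  [/\ tlin rho,
      (forall m, teq3 [seq (q.1, q.2, p.2) | p <- rho m, q <- D p.1]
                      [seq (p.1, q.1, q.2) | p <- rho m, q <- rho p.2]) &
      (forall m, \sum_(p <- rho m) e p.1 *: p.2 = m)].

Definition is_right_module (R : lmodType k) (mulR : R -> R -> R) (oneR : R)
  (V : lmodType k) (act : V -> R -> V) : Prop :=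
  [/\ bilin act, (forall v, act v oneR = v) &
      (forall v x y, act (act v x) y = act v (mulR x y))].

Definition is_flat (C : lmodType k) : Prop :=
  forall (M N : lmodType k) (f : M -> N), klin f -> injective f ->
  forall s t : seq (C * M),
    teq2 [seq (p.1, f p.2) | p <- s] [seq (p.1, f p.2) | p <- t] -> teq2 s t.

Definition is_DoiHopf_datum
  (H : lmodType k) (mulH : H -> H -> H) (oneH : H) (DH : H -> seq (H * H)) (eH : H -> k)
  (A : lmodType k) (mulA : A -> A -> A) (oneA : A) (rhoA : A -> seq (H * A))
  (C : lmodType k) (DC : C -> seq (C * C)) (eC : C -> k) (actC : C -> H -> C) : Prop :=
  [/\ is_bialgebra mulH oneH DH eH,
      [/\ is_algebra mulA oneA, is_left_comodule DH eH rhoA,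
          teq2 (rhoA oneA) [:: (oneH, oneA)] &
          (forall a b, teq2 (rhoA (mulA a b))
                         [seq (mulH p.1 q.1, mulA p.2 q.2) | p <- rhoA a, q <- rhoA b])],
      [/\ is_coalgebra DC eC, is_right_module mulH oneH actC,
          (forall c h, teq2 (DC (actC c h))
                         [seq (actC p.1 q.1, actC p.2 q.2) | p <- DC c, q <- DH h]) &
          (forall c h, eC (actC c h) = eC c * eH h)] &
      is_flat C].

Definition is_DoiHopf_module
  (H : lmodType k) (mulH : H -> H -> H) (oneH : H) (DH : H -> seq (H * H)) (eH : H -> k)
  (A : lmodType k) (mulA : A -> A -> A) (oneA : A) (rhoA : A -> seq (H * A))
  (C : lmodType k) (DC : C -> seq (C * C)) (eC : C -> k) (actC : C -> H -> C)
  (M : lmodType k) (actM : M -> A -> M) (rhoM : M -> seq (C * M)) : Prop :=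
  [/\ is_right_module mulA oneA actM, is_left_comodule DC eC rhoM &
      (forall m a, teq2 (rhoM (actM m a))
                     [seq (actC p.1 q.1, actM p.2 q.2) | p <- rhoM m, q <- rhoA a])].

(* A-integrals  gamma : C -> Hom(C, A), written curried: gamma c d = gamma(c)(d).
   Iterated coaction: a_<-2> (x) a_<-1> (x) a_<0> = (Delta_H (x) id) rho_A (a). *)
Definition is_A_integral
  (H : lmodType k) (mulH : H -> H -> H) (oneH : H) (DH : H -> seq (H * H)) (eH : H -> k)
  (A : lmodType k) (mulA : A -> A -> A) (oneA : A) (rhoA : A -> seq (H * A))
  (C : lmodType k) (DC : C -> seq (C * C)) (eC : C -> k) (actC : C -> H -> C)
  (gamma : C -> C -> A) : Prop :=
  [/\ bilin gamma,
      (forall a c d,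
         \sum_(p <- rhoA a) \sum_(q <- DH p.1)
             mulA p.2 (gamma (actC c q.1) (actC d q.2))
         = mulA (gamma c d) a) &
      (forall c d,
         teq2 [seq (p.1, gamma p.2 d) | p <- DC c]
              [seq (actC q.2 r.1, r.2) | q <- DC d, r <- rhoA (gamma c q.1)])].

End DoiHopf.

(* Main.v *)
Require Import Defs.
From HB Require Import structures.
From mathcomp Require Import all_boot all_order all_algebra.
From Stdlib Require Import ClassicalEpsilon FunctionalExtensionality PropExtensionality.
Set Implicit Arguments. Unset Strict Implicit. Unset Printing Implicit Defensive.
Import GRing.Theory.
Local Open Scope ring_scope.

Section Lin.
Variable k : comPzRingType.
Implicit Types U V W : lmodType k.

Lemma klin0 U W (g : U -> W) : klin g -> g 0 = 0.
Proof.
move=> H; have E := H 1 0 0; rewrite !scale1r addr0 in E.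
have: g 0 + g 0 - g 0 = g 0 - g 0 by rewrite -E.
by rewrite addrK subrr.
Qed.
Lemma klinD U W (g : U -> W) : klin g -> forall u v, g (u + v) = g u + g v.
Proof. by move=> H u v; have := H 1 u v; rewrite !scale1r. Qed.
Lemma klinZ U W (g : U -> W) : klin g -> forall a u, g (a *: u) = a *: g u.
Proof. by move=> H a u; rewrite -[a *: u]addr0 H klin0 // addr0. Qed.
Lemma klinN U W (g : U -> W) : klin g -> forall u, g (- u) = - g u.
Proof. by move=> H u; rewrite -scaleN1r klinZ // scaleN1r. Qed.
Lemma klin_sum U W (g : U -> W) : klin g ->
  forall I (r : seq I) (F : I -> U), g (\sum_(i <- r) F i) = \sum_(i <- r) g (F i).
Proof.
move=> H I r F; elim: r => [|x r IH]; first by rewrite !big_nil klin0.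
by rewrite !big_cons klinD // IH.
Qed.
Lemma bilin1 U V W (f : U -> V -> W) : bilin f -> forall v, klin (f^~ v).
Proof. by case=> H1 H2 v a u u'; rewrite H1. Qed.
Lemma bilin2 U V W (f : U -> V -> W) : bilin f -> forall u, klin (f u).
Proof. by case=> H1 H2 u a v v'; rewrite H2. Qed.
Lemma klin_comp U V W (g : V -> W) (h : U -> V) : klin g -> klin h -> klin (g \o h).
Proof. by move=> Hg Hh a u v /=; rewrite Hh Hg. Qed.
Lemma klin_sumf U W I (r : seq I) (F : I -> U -> W) :
  (forall i, klin (F i)) -> klin (fun u => \sum_(i <- r) F i u).
Proof.
move=> H a u v; rewrite scaler_sumr -big_split /=; apply: eq_bigr => i _; exact: H.
Qed.
Lemma mkbilin U V W (f : U -> V -> W) :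
  (forall v, klin (f^~ v)) -> (forall u, klin (f u)) -> bilin f.
Proof. by move=> H1 H2; split=> *; [apply: H1 | apply: H2]. Qed.
Lemma teq2_tsum U V (s t : seq (U * V)) W (f : U -> V -> W) :
  teq2 s t -> bilin f -> tsum2 f s = tsum2 f t.
Proof. by move=> H Hf; apply: H. Qed.
Lemma tlin_klin (M U V W : lmodType k) (D : M -> seq (U * V)) (f : U -> V -> W) :
  tlin D -> bilin f -> klin (fun m => tsum2 f (D m)).
Proof.
move=> HD Hf a m m'; rewrite (HD a m m' W f Hf) /tsum2 big_cat big_map /=.
by rewrite scaler_sumr; congr (_ + _); apply: eq_bigr => p _; rewrite (klinZ (bilin1 Hf _)).
Qed.

Lemma mktrilin (U V X W : lmodType k) (f : U -> V -> X -> W) :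
  (forall v x, klin (fun u => f u v x)) -> (forall u x, klin (fun v => f u v x)) ->
  (forall u v, klin (f u v)) -> trilin f.
Proof. by move=> H1 H2 H3; split=> *; [apply: H1 | apply: H2 | apply: H3]. Qed.
Lemma trilin_bil (U V X W : lmodType k) (f : U -> V -> X -> W) : trilin f -> forall u, bilin (f u).
Proof. by case=> H1 H2 H3 u; split=> *; [apply: H2 | apply: H3]. Qed.
End Lin.

Section Quot.
Variable k : comPzRingType.
Variables C A : lmodType k.
Definition TT := seq (C * A).
Lemma teq2_refl (s : TT) : teq2 s s. Proof. by []. Qed.
Lemma teq2_sym (s t : TT) : teq2 s t -> teq2 t s.
Proof. by move=> H W f Hf; rewrite (H W f Hf). Qed.
Lemma teq2_trans (s t u : TT) : teq2 s t -> teq2 t u -> teq2 s u.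
Proof. by move=> H1 H2 W f Hf; rewrite (H1 W f Hf) (H2 W f Hf). Qed.

Definition canon (s : TT) : TT := epsilon (inhabits [::]) (fun t => teq2 s t).
Lemma canon_teq s : teq2 s (canon s).
Proof. by apply: (epsilon_spec (inhabits [::]) (fun t => teq2 s t)); exists s. Qed.
Lemma canon_eq s t : teq2 s t -> canon s = canon t.
Proof.
move=> H; rewrite /canon; congr (epsilon _ _).
apply: functional_extensionality => u; apply: propositional_extensionality; split.
  by move=> H'; apply: teq2_trans (teq2_sym H) H'.
by move=> H'; apply: teq2_trans H H'.
Qed.
Lemma canon_idem s : canon (canon s) == canon s.
Proof. by apply/eqP; symmetry; apply: canon_eq; apply: canon_teq. Qed.

Definition TM := {s : TT | canon s == s}.
HB.instance Definition _ := Choice.on TM.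
Definition cls (s : TT) : TM := exist _ (canon s) (canon_idem s).
Lemma cls_val (x : TM) : cls (val x) = x.
Proof. by apply: val_inj => /=; apply/eqP; case: x. Qed.
Lemma cls_eq s t : teq2 s t -> cls s = cls t.
Proof. by move=> H; apply: val_inj => /=; apply: canon_eq. Qed.

Definition ts (W : lmodType k) (f : C -> A -> W) (x : TM) : W := tsum2 f (val x).
Lemma ts_cls (W : lmodType k) (f : C -> A -> W) s : bilin f -> ts f (cls s) = tsum2 f s.
Proof. by move=> Hf; rewrite /ts /=; symmetry; apply: canon_teq. Qed.
Lemma eqTM x y : (forall (W : lmodType k) (f : C -> A -> W), bilin f -> ts f x = ts f y) -> x = y.
Proof. by move=> H; rewrite -(cls_val x) -(cls_val y); apply: cls_eq. Qed.

Definition addT (x y : TM) := cls (val x ++ val y).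
Definition zeroT := cls [::].
Definition oppT (x : TM) := cls [seq (- p.1, p.2) | p <- val x].
Definition scaleT (a : k) (x : TM) := cls [seq (a *: p.1, p.2) | p <- val x].
Section TS.
Variables (W : lmodType k) (f : C -> A -> W) (Hf : bilin f).
Lemma ts_add x y : ts f (addT x y) = ts f x + ts f y.
Proof. by rewrite ts_cls // /tsum2 big_cat. Qed.
Lemma ts_zero : ts f zeroT = 0.
Proof. by rewrite ts_cls // /tsum2 big_nil. Qed.
Lemma ts_opp x : ts f (oppT x) = - ts f x.
Proof.
rewrite ts_cls // /tsum2 big_map /ts /tsum2 -sumrN; apply: eq_bigr => p _.
by rewrite (klinN (bilin1 Hf _)).
Qed.
Lemma ts_scale a x : ts f (scaleT a x) = a *: ts f x.
Proof.
rewrite ts_cls // /tsum2 big_map /ts /tsum2 scaler_sumr; apply: eq_bigr => p _.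
by rewrite (klinZ (bilin1 Hf _)).
Qed.
End TS.

Lemma addTA : associative addT.
Proof. by move=> x y z; apply: eqTM => W f Hf; rewrite !ts_add // addrA. Qed.
Lemma addTC : commutative addT.
Proof. by move=> x y; apply: eqTM => W f Hf; rewrite !ts_add // addrC. Qed.
Lemma add0T : left_id zeroT addT.
Proof. by move=> x; apply: eqTM => W f Hf; rewrite !ts_add // ts_zero // add0r. Qed.
Lemma addNT : left_inverse zeroT oppT addT.
Proof. by move=> x; apply: eqTM => W f Hf; rewrite !ts_add // ts_zero // ts_opp // addNr. Qed.
HB.instance Definition _ := GRing.isZmodule.Build TM addTA addTC add0T addNT.
Lemma scaleTA a b v : scaleT a (scaleT b v) = scaleT (a * b) v.
Proof. by apply: eqTM => W f Hf; rewrite !ts_scale // scalerA. Qed.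
Lemma scale1T : left_id 1 scaleT.
Proof. by move=> x; apply: eqTM => W f Hf; rewrite !ts_scale // scale1r. Qed.
Lemma scaleTDr : right_distributive scaleT +%R.
Proof. by move=> a x y; apply: eqTM => W f Hf; rewrite ts_scale // !ts_add // !ts_scale // scalerDr. Qed.
Lemma scaleTDl v : {morph scaleT^~ v: a b / a + b}.
Proof. by move=> a b; apply: eqTM => W f Hf; rewrite ts_scale // !ts_add // !ts_scale // scalerDl. Qed.
HB.instance Definition _ := GRing.Zmodule_isLmodule.Build k TM scaleTA scale1T scaleTDr scaleTDl.

Lemma ts_klin (W : lmodType k) (f : C -> A -> W) : bilin f -> klin (ts f).
Proof. by move=> Hf a x y; rewrite (ts_add Hf (a *: x) y) (ts_scale Hf a x). Qed.

Definition sg (c : C) (b : A) : TM := cls [:: (c, b)].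
Lemma ts_sg (W : lmodType k) (f : C -> A -> W) c b : bilin f -> ts f (sg c b) = f c b.
Proof. by move=> Hf; rewrite ts_cls // /tsum2 big_seq1. Qed.
Lemma sg_bilin : bilin sg.
Proof.
apply: mkbilin => [b|c] a u v; apply: eqTM => W f Hf;
  rewrite (ts_klin Hf) !ts_sg //; [apply: (bilin1 Hf) | apply: (bilin2 Hf)].
Qed.
Lemma cls_sum s : cls s = \sum_(p <- s) sg p.1 p.2.
Proof.
apply: eqTM => W f Hf; rewrite ts_cls // (klin_sum (ts_klin Hf)).
by apply: eq_bigr => p _; rewrite ts_sg.
Qed.
End Quot.

Section DH.
Variable k : comPzRingType.
Variables (H : lmodType k) (mulH : H -> H -> H) (oneH : H) (DH : H -> seq (H * H)) (eH : H -> k)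
  (A : lmodType k) (mulA : A -> A -> A) (oneA : A) (rhoA : A -> seq (H * A))
  (C : lmodType k) (DC : C -> seq (C * C)) (eC : C -> k) (actC : C -> H -> C).
Hypothesis hD : is_DoiHopf_datum mulH oneH DH eH mulA oneA rhoA DC eC actC.

Lemma mulA_bil : bilin mulA. Proof. by case: hD => _ [[]]. Qed.
Lemma mulA1 x : mulA x oneA = x. Proof. by case: hD => _ [[]]. Qed.
Lemma mul1A x : mulA oneA x = x. Proof. by case: hD => _ [[]]. Qed.
Lemma mulAA x y z : mulA x (mulA y z) = mulA (mulA x y) z. Proof. by case: hD => _ [[]]. Qed.
Lemma rhoA_tlin : tlin rhoA. Proof. by case: hD => _ [_ []]. Qed.
Lemma rhoA_coassoc m : teq3 [seq (q.1, q.2, p.2) | p <- rhoA m, q <- DH p.1]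
                      [seq (p.1, q.1, q.2) | p <- rhoA m, q <- rhoA p.2].
Proof. by case: hD => _ [_ []]. Qed.
Lemma rhoA_counit m : \sum_(p <- rhoA m) eH p.1 *: p.2 = m.
Proof. by case: hD => _ [_ []]. Qed.
Lemma rhoA_one : teq2 (rhoA oneA) [:: (oneH, oneA)]. Proof. by case: hD => _ []. Qed.
Lemma rhoA_mul a b : teq2 (rhoA (mulA a b))
                         [seq (mulH p.1 q.1, mulA p.2 q.2) | p <- rhoA a, q <- rhoA b].
Proof. by case: hD => _ []. Qed.
Lemma DC_tlin : tlin DC. Proof. by case: hD => _ _ [[]]. Qed.
Lemma eC_kform : kform eC. Proof. by case: hD => _ _ [[]]. Qed.
Lemma DC_coassoc c : teq3 [seq (q.1, q.2, p.2) | p <- DC c, q <- DC p.1]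
                      [seq (p.1, q.1, q.2) | p <- DC c, q <- DC p.2].
Proof. by case: hD => _ _ [[]]. Qed.
Lemma DC_counitL c : \sum_(p <- DC c) eC p.1 *: p.2 = c. Proof. by case: hD => _ _ [[]]. Qed.
Lemma DC_counitR c : \sum_(p <- DC c) eC p.2 *: p.1 = c. Proof. by case: hD => _ _ [[]]. Qed.
Lemma actC_bil : bilin actC. Proof. by case: hD => _ _ [_ []]. Qed.
Lemma actC1 c : actC c oneH = c. Proof. by case: hD => _ _ [_ []]. Qed.
Lemma actCA c x y : actC (actC c x) y = actC c (mulH x y). Proof. by case: hD => _ _ [_ []]. Qed.
Lemma DC_act c h : teq2 (DC (actC c h))
                         [seq (actC p.1 q.1, actC p.2 q.2) | p <- DC c, q <- DH h].
Proof. by case: hD => _ _ []. Qed.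
Lemma eC_act c h : eC (actC c h) = eC c * eH h. Proof. by case: hD => _ _ []. Qed.

Local Notation M := (TM C A).

Definition actM (x : M) (a : A) : M :=
  cls [seq (actC p.1 q.1, mulA p.2 q.2) | p <- val x, q <- rhoA a].
Definition ag (W : lmodType k) (f : C -> A -> W) a :=
  fun c b => \sum_(q <- rhoA a) f (actC c q.1) (mulA b q.2).

Lemma bil_act (W : lmodType k) (f : C -> A -> W) c b : bilin f ->
  bilin (fun h d => f (actC c h) (mulA b d)).
Proof.
move=> Hf; apply: mkbilin => [d|h].
  exact: (klin_comp (bilin1 Hf _) (bilin2 actC_bil c)).
exact: (klin_comp (bilin2 Hf _) (bilin2 mulA_bil b)).
Qed.

Lemma ag_bilin (W : lmodType k) (f : C -> A -> W) a : bilin f -> bilin (ag f a).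
Proof.
move=> Hf; apply: mkbilin => [b|c]; apply: klin_sumf => q.
  exact: (klin_comp (bilin1 Hf _) (bilin1 actC_bil _)).
exact: (klin_comp (bilin2 Hf _) (bilin1 mulA_bil _)).
Qed.

Lemma ts_actM (W : lmodType k) (f : C -> A -> W) x a : bilin f ->
  ts f (actM x a) = ts (ag f a) x.
Proof. by move=> Hf; rewrite ts_cls // /tsum2 big_allpairs_dep. Qed.

Definition rhoM (x : M) : seq (C * M) := [seq (q.1, sg q.2 p.2) | p <- val x, q <- DC p.1].
Definition rg (W : lmodType k) (f : C -> M -> W) :=
  fun c b => \sum_(q <- DC c) f q.1 (sg q.2 b).

Lemma rg_bilin (W : lmodType k) (f : C -> M -> W) : bilin f -> bilin (rg f).
Proof.
move=> Hf; apply: mkbilin => [b|c].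
  apply: (tlin_klin (f := fun u v => f u (sg v b)) DC_tlin).
  apply: mkbilin => [v|u]; first exact: (bilin1 Hf).
  exact: (klin_comp (bilin2 Hf u) (bilin1 (@sg_bilin _ C A) b)).
apply: klin_sumf => q; exact: (klin_comp (bilin2 Hf _) (bilin2 (@sg_bilin _ C A) _)).
Qed.

Lemma tsum_rhoM (W : lmodType k) (f : C -> M -> W) x : bilin f ->
  tsum2 f (rhoM x) = ts (rg f) x.
Proof. by move=> Hf; rewrite /tsum2 big_allpairs_dep. Qed.


Lemma actM_bil : bilin actM.
Proof.
apply: mkbilin => [b|x] a u v; apply: eqTM => W f Hf.
  rewrite ts_actM // (ts_klin (ag_bilin b Hf)) (ts_klin Hf) !ts_actM //.
rewrite (ts_klin Hf) !ts_actM // /ts /tsum2 scaler_sumr -big_split /=.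
apply: eq_bigr => p _.
exact: (tlin_klin rhoA_tlin (bil_act p.1 p.2 Hf)).
Qed.

Lemma actM1 x : actM x oneA = x.
Proof.
apply: eqTM => W f Hf; rewrite ts_actM //; apply: eq_bigr => p _; rewrite /ag.
have := rhoA_one (bil_act p.1 p.2 Hf); rewrite /tsum2 big_seq1 /= => ->.
by rewrite actC1 mulA1.
Qed.

Lemma actMA x a b : actM (actM x a) b = actM x (mulA a b).
Proof.
apply: eqTM => W f Hf; rewrite !ts_actM // ?ts_actM //; last exact: ag_bilin.
apply: eq_bigr => p _.
have := rhoA_mul a b (bil_act p.1 p.2 Hf); rewrite /tsum2 /ag /= => ->.
rewrite big_allpairs_dep /=; apply: eq_bigr => r _; apply: eq_bigr => q _.
by rewrite actCA mulAA.
Qed.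

Lemma rhoM_tlin : tlin rhoM.
Proof.
move=> a x y W f Hf.
rewrite tsum_rhoM // (ts_klin (rg_bilin Hf)) /tsum2 big_cat big_map /=.
rewrite -(tsum_rhoM x Hf) -(tsum_rhoM y Hf) /tsum2 scaler_sumr; congr (_ + _).
by apply: eq_bigr => p _; rewrite (klinZ (bilin1 Hf _)).
Qed.

Lemma rhoM_coassoc x : teq3 [seq (q.1, q.2, p.2) | p <- rhoM x, q <- DC p.1]
                      [seq (p.1, q.1, q.2) | p <- rhoM x, q <- rhoM p.2].
Proof.
move=> W f Hf; rewrite /tsum3 !big_allpairs_dep /=.
apply: eq_bigr => p _.
symmetry; transitivity (\sum_(q <- DC p.1) rg (f q.1) q.2 p.2).
  apply: eq_bigr => q _; rewrite -(ts_sg _ _ (rg_bilin (trilin_bil Hf q.1))).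
  by rewrite -tsum_rhoM //; apply: trilin_bil.
symmetry.
have HF : trilin (fun u v w => f u v (sg w p.2)).
  apply: mktrilin => [v w|u w|u v].
  - by case: Hf => H1 _ _ a u u'; rewrite H1.
  - by case: Hf => _ H2 _ a v v'; rewrite H2.
  exact: (klin_comp (bilin2 (trilin_bil Hf u) v) (bilin1 (@sg_bilin _ C A) p.2)).
have := DC_coassoc p.1 HF; rewrite /tsum3 !big_allpairs_dep /= => ->.
by [].
Qed.

Lemma rhoM_counit x : \sum_(p <- rhoM x) eC p.1 *: p.2 = x.
Proof.
rewrite big_allpairs_dep /=; apply: eqTM => W f Hf.
rewrite (klin_sum (ts_klin Hf)); apply: eq_bigr => p _ /=.
transitivity (f (\sum_(q <- DC p.1) eC q.1 *: q.2) p.2); last by rewrite DC_counitL.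
rewrite (klin_sum (ts_klin Hf)) (klin_sum (bilin1 Hf _)).
by apply: eq_bigr => q _; rewrite (klinZ (ts_klin Hf)) ts_sg // (klinZ (bilin1 Hf _)).
Qed.

Lemma actM_sg c b a : actM (sg c b) a = \sum_(t <- rhoA a) sg (actC c t.1) (mulA b t.2).
Proof.
apply: eqTM => W f Hf; rewrite ts_actM // ts_sg; last exact: ag_bilin.
rewrite (klin_sum (ts_klin Hf)).
by apply: eq_bigr => t _; rewrite ts_sg.
Qed.

Lemma rhoM_act x a : teq2 (rhoM (actM x a))
   [seq (actC p.1 q.1, actM p.2 q.2) | p <- rhoM x, q <- rhoA a].
Proof.
move=> W f Hf; rewrite tsum_rhoM // ts_actM; last exact: rg_bilin.
rewrite /tsum2 !big_allpairs_dep /=.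
rewrite /ts /tsum2; apply: eq_bigr => p _; rewrite /ag /rg.
transitivity (\sum_(r <- rhoA a) \sum_(u <- DC p.1) \sum_(v <- DH r.1)
   f (actC u.1 v.1) (sg (actC u.2 v.2) (mulA p.2 r.2))).
  apply: eq_bigr => r _.
  have Hg : bilin (fun y z => f y (sg z (mulA p.2 r.2))).
    apply: mkbilin => [z|y]; first exact: (bilin1 Hf).
    exact: (klin_comp (bilin2 Hf y) (bilin1 (@sg_bilin _ C A) _)).
  by have := DC_act p.1 r.1 Hg; rewrite /tsum2 big_allpairs_dep /= => ->.
rewrite exchange_big /=; apply: eq_bigr => u _.
under [in RHS]eq_bigr do rewrite actM_sg (klin_sum (bilin2 Hf _)).
have HF : trilin (fun h1 h2 b => f (actC u.1 h1) (sg (actC u.2 h2) (mulA p.2 b))).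
  apply: mktrilin => [h2 b|h1 b|h1 h2].
  - exact: (klin_comp (bilin1 Hf _) (bilin2 actC_bil _)).
  - exact: (klin_comp (bilin2 Hf _) (klin_comp (bilin1 (@sg_bilin _ C A) _) (bilin2 actC_bil _))).
  exact: (klin_comp (bilin2 Hf _) (klin_comp (bilin2 (@sg_bilin _ C A) _) (bilin2 mulA_bil _))).
by have := rhoA_coassoc a HF; rewrite /tsum3 !big_allpairs_dep /= => ->.
Qed.

Lemma TM_DoiHopf :
  is_DoiHopf_module mulH oneH DH eH mulA oneA rhoA DC eC actC actM rhoM.
Proof.
split; first by split; [exact: actM_bil | exact: actM1 | move=> *; exact: actMA].
  by split; [exact: rhoM_tlin | exact: rhoM_coassoc | exact: rhoM_counit].
exact: rhoM_act.
Qed.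

Variable gamma : C -> C -> A.
Hypothesis hI : is_A_integral mulH oneH DH eH mulA oneA rhoA DC eC actC gamma.
Lemma gam_bil : bilin gamma. Proof. by case: hI. Qed.

Lemma p3p2 :
  (forall (M : lmodType k) (actM : M -> A -> M) (rhoM : M -> seq (C * M)),
       is_DoiHopf_module mulH oneH DH eH mulA oneA rhoA DC eC actC actM rhoM ->
       forall m : M,
         \sum_(p <- rhoM m) \sum_(q <- DC p.1) actM p.2 (gamma q.1 q.2) = m) ->
  (forall (c : C) (a : A),
       teq2 (flatten [seq [seq (actC p.2 r.1, mulA a r.2) | r <- rhoA (gamma q.1 q.2)]
                      | p <- DC c, q <- DC p.1])
            [:: (c, a)]).
Proof.
move=> H3 c a W f Hf.
have E := H3 _ _ _ TM_DoiHopf (sg c a).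
rewrite /tsum2 big_seq1 big_flatten big_allpairs_dep /=.
transitivity (ts f (sg c a)); last by rewrite ts_sg.
rewrite -E.
pose F := fun (d : C) (y : M) => \sum_(q <- DC d) actM y (gamma q.1 q.2).
have HF : bilin F.
  apply: mkbilin => [y|d].
    apply: (tlin_klin (f := fun u v => actM y (gamma u v)) DC_tlin).
    apply: mkbilin => [v|u].
      exact: (klin_comp (bilin2 actM_bil y) (bilin1 gam_bil v)).
    exact: (klin_comp (bilin2 actM_bil y) (bilin2 gam_bil u)).
  by apply: klin_sumf => q; apply: (bilin1 actM_bil).
have -> : \sum_(p <- rhoM (sg c a)) \sum_(q <- DC p.1) actM p.2 (gamma q.1 q.2)
          = ts (rg F) (sg c a) by exact: (tsum_rhoM _ HF).
rewrite ts_sg; last exact: rg_bilin.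
rewrite /rg /F (klin_sum (ts_klin Hf)); apply: eq_bigr => p _.
rewrite (klin_sum (ts_klin Hf)); apply: eq_bigr => q _.
rewrite ts_actM // ts_sg; last exact: ag_bilin.
by rewrite big_map.
Qed.

Lemma p2p1 :
  (forall (c : C) (a : A),
       teq2 (flatten [seq [seq (actC p.2 r.1, mulA a r.2) | r <- rhoA (gamma q.1 q.2)]
                      | p <- DC c, q <- DC p.1])
            [:: (c, a)]) ->
  (forall c : C, \sum_(p <- DC c) gamma p.1 p.2 = eC c *: oneA).
Proof.
move=> H2 c.
have Hf : bilin (fun (d : C) (b : A) => eC d *: b).
  apply: mkbilin => [b|d] x u v.
  - by rewrite eC_kform scalerDl scalerA.
  - by rewrite scalerDr !scalerA mulrC.
have := H2 c oneA A _ Hf; rewrite /tsum2 big_seq1 big_flatten big_allpairs_dep /= => <-.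
symmetry; transitivity (\sum_(p <- DC c) eC p.2 *: tsum2 gamma (DC p.1)).
  apply: eq_bigr => p _; rewrite /tsum2 scaler_sumr; apply: eq_bigr => q _.
  rewrite big_map /=; under eq_bigr do rewrite eC_act mul1A -scalerA.
  by rewrite -scaler_sumr rhoA_counit.
have HG := tlin_klin DC_tlin gam_bil.
transitivity (tsum2 gamma (DC (\sum_(p <- DC c) eC p.2 *: p.1))); last by rewrite DC_counitR.
move: (klin_sum HG (DC c) (fun p => eC p.2 *: p.1)) => /= ->.
by apply: eq_bigr => p _; rewrite (klinZ HG).
Qed.

Lemma p1p3 :
  (forall c : C, \sum_(p <- DC c) gamma p.1 p.2 = eC c *: oneA) ->
  (forall (M : lmodType k) (actM : M -> A -> M) (rhoM : M -> seq (C * M)),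
       is_DoiHopf_module mulH oneH DH eH mulA oneA rhoA DC eC actC actM rhoM ->
       forall m : M,
         \sum_(p <- rhoM m) \sum_(q <- DC p.1) actM p.2 (gamma q.1 q.2) = m).
Proof.
move=> H1 M act rho [[Hb Ha1 _] [_ _ Hcu] _] m.
rewrite -{2}(Hcu m); apply: eq_bigr => p _.
move: (klin_sum (bilin2 Hb p.2) (DC p.1) (fun q => gamma q.1 q.2)) => /= <-.
by rewrite H1 (klinZ (bilin2 Hb p.2)) Ha1.
Qed.

End DH.
Unset Implicit Arguments.

Theorem proposition2p1p11 (k : comPzRingType)
  (H : lmodType k) (mulH : H -> H -> H) (oneH : H) (DH : H -> seq (H * H)) (eH : H -> k)
  (A : lmodType k) (mulA : A -> A -> A) (oneA : A) (rhoA : A -> seq (H * A))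
  (C : lmodType k) (DC : C -> seq (C * C)) (eC : C -> k) (actC : C -> H -> C)
  (gamma : C -> C -> A) :
  is_DoiHopf_datum mulH oneH DH eH mulA oneA rhoA DC eC actC ->
  is_A_integral mulH oneH DH eH mulA oneA rhoA DC eC actC gamma ->
  [<->
    (* (1) gamma is total *)
    (forall c : C, \sum_(p <- DC c) gamma p.1 p.2 = eC c *: oneA);
    (* (2) sum c_(3) . gamma(c_(1))(c_(2))_<-1> (x) a gamma(c_(1))(c_(2))_<0> = c (x) a,
           with c_(1) (x) c_(2) (x) c_(3) = (Delta (x) id) Delta c *)
    (forall (c : C) (a : A),
       teq2 (flatten [seq [seq (actC p.2 r.1, mulA a r.2) | r <- rhoA (gamma q.1 q.2)]
                      | p <- DC c, q <- DC p.1])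
            [:: (c, a)]);
    (* (3) for every Doi-Hopf module M and m in M,
           sum m_<0> gamma(m_<-2>)(m_<-1>) = m *)
    (forall (M : lmodType k) (actM : M -> A -> M) (rhoM : M -> seq (C * M)),
       is_DoiHopf_module mulH oneH DH eH mulA oneA rhoA DC eC actC actM rhoM ->
       forall m : M,
         \sum_(p <- rhoM m) \sum_(q <- DC p.1) actM p.2 (gamma q.1 q.2) = m)].
Proof.
move=> hD hI; split; [|split].
- by move=> H1; apply: (p3p2 hD hI); apply: (p1p3 (gamma := gamma)).
- by move=> H2; apply: (p1p3 (gamma := gamma)); apply: (p2p1 hD hI).
- by move=> H3; apply: (p2p1 hD hI); apply: (p3p2 hD hI).
Qed.
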